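(* Let $\mathcal C$ be an energy timed path forming a cycle from state $s_0$ back to $s_0$, and let $L\in\mathbb Q$. For $U\in\mathbb Q$ let $\mathcal R_{\mathcal C}(w_0,w_1,U)$ denote $\mathcal R^{[L;U]}_{\mathcal C}(w_0,w_1)$, and define $$\mathcal R^\infty_{\mathcal C}(a,b,U)\iff L\le a\le b\le U\ \wedge\ \forall w_0\in[a;b].\ \exists w_1\in[a;b].\ \mathcal R_{\mathcal C}(w_0,w_1,U).$$ Assume the set $\{(a,b,U)\mid \mathcal R^\infty_{\mathcal C}(a,b,U)\}$ is nonempty. Then there is a least value $a^{\mathcal C}_{\min}\in\mathbb Q$ such that $\{(b,U)\mid \mathcal R^\infty_{\mathcal C}(a^{\mathcal C}_{\min},b,U)\}\neq\emptyset$, and: (1) for every energy level $w<a^{\mathcal C}_{\min}$ and every $U$, there is no infinite run from $(s_0,\mathbf 0,w)$ iterating $\mathcal C$ forever and satisfying the energy constraint $[L;U]$; (2) for every $w\ge a^{\mathcal C}_{\min}$ there exist $U$ and an infinite run from $(s_0,\mathbf 0,w)$ iterating $\mathcal C$ forever and satisfying $[L;U]$.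
   Context: An energy timed automaton is a timed automaton with closed (non-strict) clock constraints, a rational energy rate $r(s)$ in each state and a rational energy update $u$ on each transition; during a delay $d\ge0$ in state $s$ the energy grows by $d\cdot r(s)$, and a transition adds $u$. An energy timed path (ETP) from $s_0$ to $s_n$ is such an automaton whose states $s_0,\dots,s_n$ are linked by exactly one transition from $s_i$ to $s_{i+1}$ each; a cycle is an ETP whose last state is identified with its first state $s_0$. A run satisfies the energy constraint $[L;U]$ if all its energy levels lie in $[L;U]$. For an energy constraint $E$, $\mathcal R^E_{\mathcal C}(w_0,w_1)$ holds iff there is a finite run of $\mathcal C$ from $(s_0,\mathbf 0,w_0)$ to $(s_0,\mathbf 0,w_1)$ satisfying $E$ ($\mathbf 0$ the zero clock valuation). An infinite run iterating $\mathcal C$ forever is a concatenation of infinitely many runs of $\mathcal C$, each starting and ending with all clocks $0$, the final energy of one being the initial energy of the next. *)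

(* Defs.v *)
From Stdlib Require Import Reals QArith Qreals List Lia.
Open Scope R_scope.

Definition valuation := nat -> R.

Inductive atom : Type :=
| ALe : nat -> nat -> atom
| AGe : nat -> nat -> atom.

Definition constraint := list atom.

Definition sat_atom (v : valuation) (a : atom) : Prop :=
  match a with
  | ALe x c => v x <= INR c
  | AGe x c => INR c <= v x
  end.

Definition sat (g : constraint) (v : valuation) : Prop :=
  forall a, In a g -> sat_atom v a.

Definition delay (v : valuation) (d : R) : valuation := fun x => v x + d.

Definition reset (r : list nat) (v : valuation) : valuation :=
  fun x => if in_dec Nat.eq_dec x r then 0 else v x.

Definition zero_val : valuation := fun _ => 0.

(** An energy timed path forming a cycle: states s_0 .. s_{n-1}, and for each
    i < n exactly one transition from s_i to s_{(i+1) mod n} (the last one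
    returns to s_0). *)
Record cycleETP : Type := {
  nstates : nat;
  nclk    : nat;
  rate    : nat -> Q;
  inv     : nat -> constraint;
  guard   : nat -> constraint;
  resets  : nat -> list nat;
  upd     : nat -> Q
}.

Definition atom_clock (a : atom) : nat :=
  match a with ALe x _ => x | AGe x _ => x end.

Definition wf_cycle (C : cycleETP) : Prop :=
  (1 <= nstates C)%nat /\
  forall i, (i < nstates C)%nat ->
    (forall a, In a (inv C i) -> (atom_clock a < nclk C)%nat) /\
    (forall a, In a (guard C i) -> (atom_clock a < nclk C)%nat) /\
    (forall x, In x (resets C i) -> (x < nclk C)%nat).

Definition inE (L U : Q) (e : R) : Prop := Q2R L <= e <= Q2R U.

(** Configuration i is (s_i, v i, e i); in s_i one delays d i >= 0
    (energy grows by d i * r(s_i)), then takes transition i.  Since the energy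
    is affine during a delay and invariants are convex, it suffices to check
    the endpoints of each delay. *)
Definition RC (C : cycleETP) (L U : Q) (w0 w1 : R) : Prop :=
  exists (d : nat -> R) (v : nat -> valuation) (e : nat -> R),
    v 0%nat = zero_val /\ e 0%nat = w0 /\
    (forall i, (i < nstates C)%nat ->
       0 <= d i /\
       sat (inv C i) (v i) /\
       sat (inv C i) (delay (v i) (d i)) /\
       sat (guard C i) (delay (v i) (d i)) /\
       v (S i) = reset (resets C i) (delay (v i) (d i)) /\
       e (S i) = e i + d i * Q2R (rate C i) + Q2R (upd C i) /\
       inE L U (e i) /\
       inE L U (e i + d i * Q2R (rate C i))) /\
    (forall x, (x < nclk C)%nat -> v (nstates C) x = 0) /\
    e (nstates C) = w1 /\ inE L U (e (nstates C)).

Definition Rinf (C : cycleETP) (L a b U : Q) : Prop :=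
  (L <= a)%Q /\ (a <= b)%Q /\ (b <= U)%Q /\
  forall w0, Q2R a <= w0 <= Q2R b ->
    exists w1, Q2R a <= w1 <= Q2R b /\ RC C L U w0 w1.

(** An infinite run from (s_0, 0, w) iterating C forever and satisfying [L;U]:
    a concatenation of runs of C, each starting and ending with all clocks 0. *)
Definition infRun (C : cycleETP) (L U : Q) (w : R) : Prop :=
  exists W : nat -> R, W 0%nat = w /\ forall k, RC C L U (W k) (W (S k)).

(* Main.v *)
Require Import Defs.
From Stdlib Require Import Reals QArith Qreals.
From Stdlib Require Import ZArith List Lia Lra ClassicalEpsilon Classical FunctionalExtensionality.
Open Scope R_scope.


Fixpoint lin (N : nat) (a : nat -> R) (x : nat -> R) : R :=
  match N with O => 0 | S N' => lin N' a x + a N' * x N' end.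

Lemma lin_ext_x N a x x' : (forall j, (j < N)%nat -> x j = x' j) -> lin N a x = lin N a x'.
Proof. induction N; simpl; intros H; auto. rewrite IHN by (intros; apply H; lia). rewrite H by lia. reflexivity. Qed.

Lemma lin_ext_a N a a' x : (forall j, (j < N)%nat -> a j = a' j) -> lin N a x = lin N a' x.
Proof. induction N; simpl; intros H; auto. rewrite IHN by (intros; apply H; lia). rewrite H by lia. reflexivity. Qed.

Lemma lin_comb N al be a b x : lin N (fun j => al * a j + be * b j) x = al * lin N a x + be * lin N b x.
Proof. induction N; simpl. ring. rewrite IHN. ring. Qed.

Lemma lin_zero N x : lin N (fun _ => 0) x = 0.
Proof. induction N; simpl; [ring| rewrite IHN; ring]. Qed.

Lemma lin_unit N j x : (j < N)%nat -> lin N (fun k => if Nat.eqb k j then 1 else 0) x = x j.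
Proof.
  induction N; intros H; [lia|]. simpl.
  destruct (Nat.eqb N j) eqn:E.
  - apply Nat.eqb_eq in E; subst.
    rewrite (lin_ext_a _ _ (fun _ => 0)). rewrite lin_zero. ring.
    intros k Hk. destruct (Nat.eqb k j) eqn:E2; auto. apply Nat.eqb_eq in E2; lia.
  - apply Nat.eqb_neq in E. rewrite IHN by lia. ring.
Qed.

Definition xupd (x : nat -> R) (N : nat) (y : R) : nat -> R :=
  fun j => if Nat.eq_dec j N then y else x j.

Lemma lin_upd N a x y : lin (S N) a (xupd x N y) = lin N a x + a N * y.
Proof.
  simpl. f_equal. apply lin_ext_x. intros j Hj. unfold xupd. destruct (Nat.eq_dec j N); [lia|auto].
  unfold xupd. destruct (Nat.eq_dec N N); [auto|congruence].
Qed.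

Definition cstr := ((nat -> Q) * Q)%type.
Definition cholds N (c : cstr) x := lin N (fun j => Q2R (fst c j)) x <= Q2R (snd c).
Definition holds N (cs : list cstr) x := forall c, In c cs -> cholds N c x.
Definition poly N (P : (nat -> R) -> Prop) := exists cs, forall x, P x <-> holds N cs x.

Lemma holds_ext N cs x x' : (forall j, (j < N)%nat -> x j = x' j) -> holds N cs x -> holds N cs x'.
Proof. unfold holds, cholds. intros H H1 c Hc. rewrite <- (lin_ext_x _ _ _ _ H). auto. Qed.

Definition cmb (N : nat) (p q : cstr) : cstr :=
  (fun j => (- fst q N) * fst p j + fst p N * fst q j, (- fst q N) * snd p + fst p N * snd q)%Q.

Definition isZ N (c : cstr) := match (fst c N ?= 0)%Q with Eq => true | _ => false end.
Definition isP N (c : cstr) := match (fst c N ?= 0)%Q with Gt => true | _ => false end.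
Definition isN N (c : cstr) := match (fst c N ?= 0)%Q with Lt => true | _ => false end.

Definition elim N (cs : list cstr) : list cstr :=
  filter (isZ N) cs ++ flat_map (fun p => map (fun q => cmb N p q) (filter (isN N) cs)) (filter (isP N) cs).

Lemma sign_cases N c :
  (isZ N c = true /\ Q2R (fst c N) = 0) \/ (isP N c = true /\ 0 < Q2R (fst c N)) \/
  (isN N c = true /\ Q2R (fst c N) < 0).
Proof.
  unfold isZ, isP, isN. destruct (fst c N ?= 0)%Q eqn:E.
  - left. split; auto. apply Qeq_alt in E. apply Qeq_eqR in E. rewrite E. unfold Q2R; simpl. ring.
  - right; right. split; auto. apply Qlt_alt in E. apply Qlt_Rlt in E.
    replace (Q2R 0) with 0 in E by (unfold Q2R; simpl; ring). auto.
  - right; left. split; auto. apply Qgt_alt in E. apply Qlt_Rlt in E.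
    replace (Q2R 0) with 0 in E by (unfold Q2R; simpl; ring). auto.
Qed.

Lemma isP_pos N c : isP N c = true -> 0 < Q2R (fst c N).
Proof. intros H. destruct (sign_cases N c) as [[H1 _]|[[_ H1]|[H1 _]]]; auto;
  unfold isZ, isP, isN in *; destruct (fst c N ?= 0)%Q; discriminate. Qed.
Lemma isN_neg N c : isN N c = true -> Q2R (fst c N) < 0.
Proof. intros H. destruct (sign_cases N c) as [[H1 _]|[[H1 _]|[_ H1]]]; auto;
  unfold isZ, isP, isN in *; destruct (fst c N ?= 0)%Q; discriminate. Qed.
Lemma isZ_zero N c : isZ N c = true -> Q2R (fst c N) = 0.
Proof. intros H. destruct (sign_cases N c) as [[_ H1]|[[H1 _]|[H1 _]]]; auto;
  unfold isZ, isP, isN in *; destruct (fst c N ?= 0)%Q; discriminate. Qed.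

Lemma cmb_val N p q x : lin N (fun j => Q2R (fst (cmb N p q) j)) x =
  (- Q2R (fst q N)) * lin N (fun j => Q2R (fst p j)) x + Q2R (fst p N) * lin N (fun j => Q2R (fst q j)) x.
Proof.
  rewrite <- lin_comb. apply lin_ext_a. intros j _. unfold cmb; simpl.
  rewrite Q2R_plus, !Q2R_mult, Q2R_opp. ring.
Qed.
Lemma cmb_b N p q : Q2R (snd (cmb N p q)) = (- Q2R (fst q N)) * Q2R (snd p) + Q2R (fst p N) * Q2R (snd q).
Proof. unfold cmb; simpl. rewrite Q2R_plus, !Q2R_mult, Q2R_opp. ring. Qed.

Lemma elim_sound N cs x y : holds (S N) cs (xupd x N y) -> holds N (elim N cs) x.
Proof.
  unfold holds, cholds. intros H c Hc. unfold elim in Hc. apply in_app_or in Hc. destruct Hc as [Hc|Hc].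
  - apply filter_In in Hc. destruct Hc as [Hc Hz]. specialize (H c Hc). rewrite lin_upd in H.
    rewrite (isZ_zero _ _ Hz) in H. lra.
  - apply in_flat_map in Hc. destruct Hc as [p [Hp Hc]]. apply in_map_iff in Hc.
    destruct Hc as [q [Hq Hq2]]. subst c. apply filter_In in Hp, Hq2. destruct Hp as [Hp Hpp]. destruct Hq2 as [Hq Hqn].
    apply isP_pos in Hpp. apply isN_neg in Hqn.
    pose proof (H p Hp) as H1. pose proof (H q Hq) as H2. rewrite lin_upd in H1, H2.
    rewrite cmb_val, cmb_b.
    set (P := lin N (fun j => Q2R (fst p j)) x) in *. set (Qv := lin N (fun j => Q2R (fst q j)) x) in *.
    set (pN := Q2R (fst p N)) in *. set (qN := Q2R (fst q N)) in *.
    assert (A1 : (- qN) * (P + pN * y) <= (- qN) * Q2R (snd p)) by (apply Rmult_le_compat_l; lra).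
    assert (A2 : pN * (Qv + qN * y) <= pN * Q2R (snd q)) by (apply Rmult_le_compat_l; lra).
    nra.
Qed.

Lemma between (lo hi : list R) : (forall l h, In l lo -> In h hi -> l <= h) ->
  exists y, (forall l, In l lo -> l <= y) /\ (forall h, In h hi -> y <= h).
Proof.
  induction lo as [|l lo IH]; intros H.
  - clear H. induction hi as [|h hi IH]. exists 0. split; intros; simpl in *; tauto.
    destruct IH as [y [_ Hy]]. exists (Rmin h y). split; [intros; simpl in *; tauto|].
    intros h' [<-|Hh]. apply Rmin_l. eapply Rle_trans; [apply Rmin_r| auto].
  - destruct IH as [y [H1 H2]]. intros; apply H; simpl; auto.
    exists (Rmax l y). split.
    + intros l' [<-|Hl]. apply Rmax_l. eapply Rle_trans; [apply H1; auto| apply Rmax_r].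
    + intros h Hh. apply Rmax_lub. apply H; simpl; auto. auto.
Qed.

Lemma elim_complete N cs x : holds N (elim N cs) x -> exists y, holds (S N) cs (xupd x N y).
Proof.
  unfold holds, cholds. intros H.
  set (Pos := filter (isP N) cs). set (Neg := filter (isN N) cs).
  set (val := fun c : cstr => lin N (fun j => Q2R (fst c j)) x).
  destruct (between (map (fun q => (Q2R (snd q) - val q) / Q2R (fst q N)) Neg)
                     (map (fun p => (Q2R (snd p) - val p) / Q2R (fst p N)) Pos)) as [y [Hy1 Hy2]].
  - intros l h Hl Hh. apply in_map_iff in Hl, Hh. destruct Hl as [q [<- Hq]]. destruct Hh as [p [<- Hp]].
    assert (Hc : In (cmb N p q) (elim N cs)).
    { unfold elim. apply in_or_app. right. apply in_flat_map. exists p. split; auto. apply in_map. auto. }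
    specialize (H _ Hc). rewrite cmb_val, cmb_b in H.
    unfold Pos, Neg in *. apply filter_In in Hp, Hq. destruct Hp as [_ Hp]. destruct Hq as [_ Hq].
    apply isP_pos in Hp. apply isN_neg in Hq. fold (val p) (val q) in H.
    set (pN := Q2R (fst p N)) in *. set (qN := Q2R (fst q N)) in *.
    set (l := (Q2R (snd q) - val q) / qN). set (h := (Q2R (snd p) - val p) / pN).
    assert (El : Q2R (snd q) - val q = l * qN) by (unfold l; field; lra).
    assert (Eh : Q2R (snd p) - val p = h * pN) by (unfold h; field; lra).
    assert (0 <= pN * (- qN) * (h - l)) by nra.
    assert (0 < pN * (- qN)) by nra.
    destruct (Rle_lt_dec l h); auto.
    assert (0 < pN * (- qN) * (l - h)) by (apply Rmult_lt_0_compat; lra). lra.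
  - exists y. intros c Hc. rewrite lin_upd. fold (val c).
    destruct (sign_cases N c) as [[Hz Hz2]|[[Hp Hp2]|[Hn Hn2]]].
    + rewrite Hz2. assert (In c (elim N cs)) by (unfold elim; apply in_or_app; left; apply filter_In; auto).
      specialize (H _ H0). fold (val c) in H. lra.
    + assert (Hh := Hy2 ((Q2R (snd c) - val c) / Q2R (fst c N))).
      assert (y <= (Q2R (snd c) - val c) / Q2R (fst c N)).
      { apply Hh. apply (in_map (fun p : cstr => (Q2R (snd p) - val p) / Q2R (fst p N))). apply filter_In; auto. }
      set (pN := Q2R (fst c N)) in *.
      assert (pN * y <= pN * ((Q2R (snd c) - val c) / pN)) by (apply Rmult_le_compat_l; lra).
      replace (pN * ((Q2R (snd c) - val c) / pN)) with (Q2R (snd c) - val c) in H1 by (field; lra). lra.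
    + assert (((Q2R (snd c) - val c) / Q2R (fst c N)) <= y).
      { apply Hy1. apply (in_map (fun p : cstr => (Q2R (snd p) - val p) / Q2R (fst p N))). apply filter_In; auto. }
      set (qN := Q2R (fst c N)) in *.
      assert ((- qN) * ((Q2R (snd c) - val c) / qN) <= (- qN) * y) by (apply Rmult_le_compat_l; lra).
      replace ((- qN) * ((Q2R (snd c) - val c) / qN)) with (- (Q2R (snd c) - val c)) in H1 by (field; lra). lra.
Qed.

Lemma poly_elim N P : poly (S N) P -> poly N (fun x => exists y, P (xupd x N y)).
Proof.
  intros [cs Hcs]. exists (elim N cs). intros x. split.
  - intros [y Hy]. apply Hcs in Hy. eapply elim_sound; eauto.
  - intros H. apply elim_complete in H. destruct H as [y Hy]. exists y. apply Hcs; auto.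
Qed.

Lemma poly_proj K n P : poly (K + n) P ->
  poly K (fun x => exists x', (forall j, (j < K)%nat -> x' j = x j) /\ P x').
Proof.
  revert P. induction n; intros P HP.
  - rewrite Nat.add_0_r in HP. destruct HP as [cs Hcs]. exists cs. intros x. split.
    + intros [x' [Hx' HP']]. apply Hcs in HP'. eapply holds_ext; [|exact HP']. auto.
    + intros H. exists x. split; auto. apply Hcs; auto.
  - rewrite Nat.add_succ_r in HP. apply poly_elim in HP. apply IHn in HP.
    destruct HP as [cs Hcs]. exists cs. intros x. rewrite <- Hcs. split.
    + intros [x' [Hx' HP']]. exists x'. split; auto. exists (x' (K + n)%nat).
      replace (xupd x' (K+n) (x' (K+n)%nat)) with x'; auto.
      apply functional_extensionality. intros j. unfold xupd. destruct (Nat.eq_dec j (K+n)); subst; auto.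
    + intros [x' [Hx' [y Hy]]]. exists (xupd x' (K+n) y). split; auto.
      intros j Hj. unfold xupd. destruct (Nat.eq_dec j (K+n)); [lia|auto].
Qed.

Definition islin N (f : (nat -> R) -> R) :=
  exists (a : nat -> Q) (c : Q), forall x, f x = lin N (fun j => Q2R (a j)) x + Q2R c.

Lemma Q2R0 : Q2R 0 = 0. Proof. unfold Q2R; simpl; ring. Qed.
Lemma Q2R1 : Q2R 1 = 1. Proof. unfold Q2R; simpl; field. Qed.

Lemma islin_const N q : islin N (fun _ => Q2R q).
Proof. exists (fun _ => 0%Q), q. intros x. rewrite (lin_ext_a _ _ (fun _ => 0)). rewrite lin_zero; ring.
  intros; apply Q2R0. Qed.

Lemma islin_var N j : (j < N)%nat -> islin N (fun x => x j).
Proof. intros H. exists (fun k => if Nat.eqb k j then 1%Q else 0%Q), 0%Q. intros x.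
  rewrite (lin_ext_a _ _ (fun k => if Nat.eqb k j then 1 else 0)). rewrite lin_unit; auto. rewrite Q2R0; ring.
  intros k _. destruct (Nat.eqb k j); [apply Q2R1|apply Q2R0]. Qed.

Lemma islin_add N f g : islin N f -> islin N g -> islin N (fun x => f x + g x).
Proof. intros [a [c Ha]] [b [d Hb]]. exists (fun j => a j + b j)%Q, (c + d)%Q. intros x.
  rewrite Ha, Hb, Q2R_plus. rewrite (lin_ext_a N (fun j => Q2R (a j + b j)) (fun j => 1 * Q2R (a j) + 1 * Q2R (b j))).
  rewrite lin_comb. ring. intros; rewrite Q2R_plus; ring. Qed.

Lemma islin_scal N q f : islin N f -> islin N (fun x => Q2R q * f x).
Proof. intros [a [c Ha]]. exists (fun j => q * a j)%Q, (q * c)%Q. intros x.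
  rewrite Ha, Q2R_mult. rewrite (lin_ext_a N (fun j => Q2R (q * a j)) (fun j => Q2R q * Q2R (a j) + 0 * Q2R (a j))).
  rewrite lin_comb. ring. intros; rewrite Q2R_mult; ring. Qed.

Lemma islin_ext N f g : (forall x, f x = g x) -> islin N f -> islin N g.
Proof. intros E [a [c H]]. exists a, c. intros x. rewrite <- E. auto. Qed.

Lemma islin_sub N f g : islin N f -> islin N g -> islin N (fun x => f x - g x).
Proof. intros Hf Hg. apply (islin_ext N (fun x => f x + Q2R (Qopp 1) * g x)).
  intros; rewrite Q2R_opp, Q2R1; ring. apply islin_add; auto. apply islin_scal; auto. Qed.

Lemma poly_ext N (P P' : (nat -> R) -> Prop) : (forall x, P x <-> P' x) -> poly N P -> poly N P'.
Proof. intros E [cs H]. exists cs. intros x. rewrite <- E. auto. Qed.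

Lemma poly_true N : poly N (fun _ => True).
Proof. exists nil. intros x. split; auto. intros _ c []. Qed.

Lemma poly_and N P P' : poly N P -> poly N P' -> poly N (fun x => P x /\ P' x).
Proof. intros [cs H] [cs' H']. exists (cs ++ cs'). intros x. rewrite H, H'. unfold holds. split.
  - intros [A B] c Hc. apply in_app_or in Hc. destruct Hc; auto.
  - intros A. split; intros c Hc; apply A; apply in_or_app; auto. Qed.

Lemma poly_le N f g : islin N f -> islin N g -> poly N (fun x => f x <= g x).
Proof. intros Hf Hg. destruct (islin_sub N f g Hf Hg) as [a [c H]].
  exists ((a, (- c)%Q) :: nil). intros x. unfold holds, cholds. split.
  - intros Hle c' [<-|[]]. simpl. rewrite Q2R_opp. specialize (H x). lra.
  - intros Hc. specialize (Hc _ (or_introl eq_refl)). simpl in Hc. rewrite Q2R_opp in Hc. specialize (H x). lra.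
Qed.

Lemma poly_forall_list {A} N (l : list A) (P : A -> (nat -> R) -> Prop) :
  (forall z, In z l -> poly N (P z)) -> poly N (fun x => forall z, In z l -> P z x).
Proof. induction l as [|a l IH]; intros H.
  - apply (poly_ext N (fun _ => True)). intros x; split; auto. intros _ z []. apply poly_true.
  - apply (poly_ext N (fun x => P a x /\ (forall z, In z l -> P z x))).
    intros x; split. intros [HA HB] z [<-|Hz]; auto. intros HA; split; auto. apply HA; simpl; auto. intros; apply HA; simpl; auto.
    apply poly_and. apply H; simpl; auto. apply IH. intros; apply H; simpl; auto.
Qed.

Lemma poly_forall_lt N n (P : nat -> (nat -> R) -> Prop) :
  (forall i, (i < n)%nat -> poly N (P i)) -> poly N (fun x => forall i, (i < n)%nat -> P i x).
Proof. induction n; intros H.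
  - apply (poly_ext N (fun _ => True)). intros x; split; auto. intros _ i Hi; lia. apply poly_true.
  - apply (poly_ext N (fun x => (forall i, (i < n)%nat -> P i x) /\ P n x)).
    intros x; split. intros [A B] i Hi. destruct (Nat.eq_dec i n); subst; auto. apply A; lia.
    intros A; split; auto. 
    apply poly_and. apply IHn. intros; apply H; lia. apply H; lia.
Qed.

Fixpoint vc (C : cycleETP) (d : nat -> R) (i : nat) : valuation :=
  match i with O => zero_val | S i' => reset (resets C i') (delay (vc C d i') (d i')) end.
Fixpoint En (C : cycleETP) (d : nat -> R) (i : nat) : R :=
  match i with O => 0 | S i' => En C d i' + d i' * Q2R (rate C i') + Q2R (upd C i') end.

Definition Feas (C : cycleETP) (d : nat -> R) : Prop :=
  (forall i, (i < nstates C)%nat -> 0 <= d i /\ sat (inv C i) (vc C d i) /\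
      sat (inv C i) (delay (vc C d i) (d i)) /\ sat (guard C i) (delay (vc C d i) (d i))) /\
  (forall y, (y < nclk C)%nat -> vc C d (nstates C) y = 0).

Definition SP (C : cycleETP) (t dl : R) : Prop :=
  exists d, Feas C d /\ (forall i, (i <= nstates C)%nat -> t <= En C d i) /\
    (forall i, (i < nstates C)%nat -> t <= En C d i + d i * Q2R (rate C i)) /\ dl <= En C d (nstates C).

Definition dd (x : nat -> R) : nat -> R := fun i => x (S (S i)).

Lemma INR_Q c : INR c = Q2R (inject_Z (Z.of_nat c)).
Proof. unfold Q2R; simpl. rewrite INR_IZR_INZ. field. Qed.

Lemma islin_vc C i y : (i <= nstates C)%nat -> islin (2 + nstates C) (fun x => vc C (dd x) i y).
Proof.
  revert y. induction i; intros y Hi; simpl.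
  - apply (islin_ext _ (fun _ => Q2R 0)). intros; apply Q2R0. apply islin_const.
  - unfold reset, delay. destruct (in_dec Nat.eq_dec y (resets C i)).
    + apply (islin_ext _ (fun _ => Q2R 0)). intros; apply Q2R0. apply islin_const.
    + apply islin_add. apply IHi; lia. unfold dd. apply islin_var. lia.
Qed.

Lemma islin_En C i : (i <= nstates C)%nat -> islin (2 + nstates C) (fun x => En C (dd x) i).
Proof.
  induction i; intros Hi; simpl.
  - apply (islin_ext _ (fun _ => Q2R 0)). intros; apply Q2R0. apply islin_const.
  - apply islin_add; [|apply islin_const]. apply islin_add. apply IHi; lia.
    apply (islin_ext _ (fun x => Q2R (rate C i) * x (S (S i)))). intros; unfold dd; ring.
    apply islin_scal. apply islin_var. lia.
Qed.

Lemma poly_sat N g (V : (nat -> R) -> valuation) : (forall y, islin N (fun x => V x y)) ->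
  poly N (fun x => sat g (V x)).
Proof.
  intros H. unfold sat. apply poly_forall_list. intros [y c|y c] _; simpl.
  - apply (poly_ext _ (fun x => V x y <= Q2R (inject_Z (Z.of_nat c)))). intros; rewrite INR_Q; tauto.
    apply poly_le; auto. apply islin_const.
  - apply (poly_ext _ (fun x => Q2R (inject_Z (Z.of_nat c)) <= V x y)). intros; rewrite INR_Q; tauto.
    apply poly_le; auto. apply islin_const.
Qed.

Definition Big (C : cycleETP) (x : nat -> R) : Prop :=
  Feas C (dd x) /\ (forall i, (i <= nstates C)%nat -> x 0%nat <= En C (dd x) i) /\
    (forall i, (i < nstates C)%nat -> x 0%nat <= En C (dd x) i + dd x i * Q2R (rate C i)) /\
    x 1%nat <= En C (dd x) (nstates C).

Lemma poly_Big C : poly (2 + nstates C) (Big C).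
Proof.
  set (n := nstates C).
  assert (Hv : forall i, (i < n)%nat -> forall y, islin (2 + n) (fun x => vc C (dd x) i y)).
  { intros; apply islin_vc; unfold n in *; lia. }
  assert (Hd : forall i, (i < n)%nat -> islin (2 + n) (fun x => dd x i)).
  { intros; unfold dd; apply islin_var; lia. }
  unfold Big, Feas. fold n.
  repeat apply poly_and.
  - apply poly_forall_lt. intros i Hi. repeat apply poly_and.
    + apply poly_le. apply (islin_ext _ (fun _ => Q2R 0)). intros; apply Q2R0. apply islin_const. auto.
    + apply poly_sat. auto.
    + apply poly_sat. intros y. unfold delay. apply islin_add; auto.
    + apply poly_sat. intros y. unfold delay. apply islin_add; auto.
  - apply poly_forall_lt. intros y Hy.
    apply (poly_ext _ (fun x => vc C (dd x) n y <= Q2R 0 /\ Q2R 0 <= vc C (dd x) n y)).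
    intros x. rewrite Q2R0. split; intros; lra.
    assert (islin (2 + n) (fun x => vc C (dd x) n y)) by (apply islin_vc; lia).
    apply poly_and; apply poly_le; auto; apply islin_const.
  - apply (poly_ext _ (fun x => forall i, (i < S n)%nat -> x 0%nat <= En C (dd x) i)).
    intros x; split; intros H i Hi; apply H; lia.
    apply poly_forall_lt. intros i Hi. apply poly_le. apply islin_var; lia. apply islin_En; unfold n in *; lia.
  - apply poly_forall_lt. intros i Hi. apply poly_le. apply islin_var; lia.
    apply islin_add. apply islin_En; unfold n in *; lia.
    apply (islin_ext _ (fun x => Q2R (rate C i) * dd x i)). intros; ring. apply islin_scal. auto.
  - apply poly_le. apply islin_var; lia. apply islin_En; lia.
Qed.

Lemma poly_SP C : poly 2 (fun x => SP C (x 0%nat) (x 1%nat)).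
Proof.
  eapply poly_ext; [|apply (poly_proj 2 (nstates C) (Big C) (poly_Big C))].
  intros x. split.
  - intros [x' [Hx' [HF [H1 [H2 H3]]]]]. exists (dd x'). rewrite <- (Hx' 0%nat), <- (Hx' 1%nat) by lia.
    split; [exact HF| split; [|split]]; auto.
  - intros [d [HF [H1 [H2 H3]]]].
    exists (fun j => match j with O => x 0%nat | 1%nat => x 1%nat | S (S k) => d k end).
    split. intros j Hj. destruct j as [|[|j]]; auto; lia.
    unfold Big, dd; simpl. split; [exact HF| split; [|split]]; auto.
Qed.

Lemma rat_above r : exists q, r <= Q2R q.
Proof. exists (inject_Z (up r)). unfold Q2R; simpl. destruct (archimed r). 
  replace (IZR (up r) * / 1) with (IZR (up r)) by field. lra. Qed.

Lemma bound_fin (f : nat -> R) n : exists B, forall i, (i <= n)%nat -> f i <= B.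
Proof. induction n. exists (f O). intros i Hi. replace i with O by lia. lra.
  destruct IHn as [B HB]. exists (Rmax B (f (S n))). intros i Hi.
  destruct (Nat.eq_dec i (S n)). subst; apply Rmax_r. eapply Rle_trans; [apply HB; lia|apply Rmax_l]. Qed.

Lemma RC_SP C L U w w1 : RC C L U w w1 -> SP C (Q2R L - w) (w1 - w).
Proof.
  intros [d [v [e [Hv0 [He0 [Hi [Hf [Hen Hin]]]]]]]].
  assert (Hv : forall i, (i <= nstates C)%nat -> v i = vc C d i /\ e i = w + En C d i).
  { induction i; intros H. simpl. split; auto. rewrite He0; ring.
    destruct IHi as [A B]. lia. destruct (Hi i) as [_ [_ [_ [_ [E1 [E2 _]]]]]]. lia.
    simpl. rewrite E1, E2, A, B. split; auto. ring. }
  exists d. split; [split|split;[|split]].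
  - intros i Hl. destruct (Hv i) as [A _]. lia. rewrite <- A. destruct (Hi i Hl) as [? [? [? [? _]]]]. auto.
  - intros y Hy. destruct (Hv (nstates C)) as [A _]. lia. rewrite <- A. auto.
  - intros i Hl. destruct (Hv i) as [_ B]. lia.
    destruct (Nat.eq_dec i (nstates C)). subst. unfold inE in Hin. rewrite B in Hin. lra.
    destruct (Hi i) as [_ [_ [_ [_ [_ [_ [Hin2 _]]]]]]]. lia. unfold inE in Hin2. rewrite B in Hin2. lra.
  - intros i Hl. destruct (Hv i) as [_ B]. lia.
    destruct (Hi i) as [_ [_ [_ [_ [_ [_ [_ Hin2]]]]]]]. lia. unfold inE in Hin2. rewrite B in Hin2. lra.
  - destruct (Hv (nstates C)) as [_ B]. lia. rewrite <- Hen, B. lra.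
Qed.

Lemma SP_RC C L w : SP C (Q2R L - w) 0 -> exists U w1, w <= w1 /\ RC C L U w w1.
Proof.
  intros [d [[HF1 HF2] [H1 [H2 H3]]]].
  set (n := nstates C) in *.
  destruct (bound_fin (fun i => Rmax (w + En C d i) (w + En C d i + d i * Q2R (rate C i))) n) as [B HB].
  destruct (rat_above B) as [U HU].
  exists U, (w + En C d n). split. lra.
  exists d, (vc C d), (fun i => w + En C d i). split; [reflexivity|]. split. simpl; ring.
  split; [|split; [auto|split; [auto|]]].
  - intros i Hl. destruct (HF1 i Hl) as [A [B1 [B2 B3]]].
    assert (HBi := HB i ltac:(lia)). simpl in HBi.
    assert (G1 := Rmax_l (w + En C d i) (w + En C d i + d i * Q2R (rate C i))).
    assert (G2 := Rmax_r (w + En C d i) (w + En C d i + d i * Q2R (rate C i))).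
    assert (K1 := H1 i ltac:(lia)). assert (K2 := H2 i Hl).
    unfold inE. repeat split; auto; simpl; try ring; lra.
  - assert (HBi := HB n ltac:(lia)). simpl in HBi.
    assert (G1 := Rmax_l (w + En C d n) (w + En C d n + d n * Q2R (rate C n))).
    assert (K1 := H1 n ltac:(lia)). unfold inE. cbv beta. fold n. lra.
Qed.

Lemma SP_mono C t dl t' dl' : SP C t dl -> t' <= t -> dl' <= dl -> SP C t' dl'.
Proof. intros [d [HF [H1 [H2 H3]]]] Ht Hd. exists d. split; auto. split; [|split].
  intros i Hi; specialize (H1 i Hi); lra. intros i Hi; specialize (H2 i Hi); lra. lra. Qed.

Lemma SP_le0 C t dl : SP C t dl -> t <= 0.
Proof. intros [d [_ [H1 _]]]. apply (H1 O). lia. Qed.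

Lemma RC_shift C L U U' w0 w1 t : RC C L U w0 w1 -> 0 <= t -> Q2R U + t <= Q2R U' ->
  RC C L U' (w0 + t) (w1 + t).
Proof.
  intros [d [v [e [Hv0 [He0 [Hi [Hf [Hen Hin]]]]]]]] Ht HU.
  exists d, v, (fun i => e i + t). split; auto. split. rewrite He0; auto.
  split; [|split; [auto|split; [rewrite Hen; auto|]]].
  - intros i Hl. destruct (Hi i Hl) as [A [B1 [B2 [B3 [B4 [B5 [B6 B7]]]]]]].
    unfold inE in *. repeat split; auto; try lra.
  - unfold inE in *. lra.
Qed.

Lemma infRun_shift C L U U' w t : infRun C L U w -> 0 <= t -> Q2R U + t <= Q2R U' ->
  infRun C L U' (w + t).
Proof. intros [W [H0 H]] Ht HU. exists (fun k => W k + t). split. rewrite H0; auto.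
  intros k. apply RC_shift with U; auto. Qed.

Lemma Rinf_run C L a b U w : Rinf C L a b U -> Q2R a <= w <= Q2R b -> infRun C L U w.
Proof.
  intros [_ [_ [_ H]]] Hw.
  set (f := fun w0 => epsilon (inhabits 0) (fun w1 => Q2R a <= w1 <= Q2R b /\ RC C L U w0 w1)).
  assert (Hf : forall w0, Q2R a <= w0 <= Q2R b -> Q2R a <= f w0 <= Q2R b /\ RC C L U w0 (f w0)).
  { intros w0 Hw0. unfold f. apply epsilon_spec. apply H; auto. }
  exists (fun k => Nat.iter k f w). split; auto.
  assert (Hk : forall k, Q2R a <= Nat.iter k f w <= Q2R b).
  { induction k; simpl; auto. apply Hf; auto. }
  intros k. simpl. apply Hf; auto.
Qed.

Lemma SP_iff C : exists cs : list cstr, forall t dl,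
  SP C t dl <-> forall c, In c cs -> Q2R (fst c 0%nat) * t + Q2R (fst c 1%nat) * dl <= Q2R (snd c).
Proof.
  destruct (poly_SP C) as [cs H]. exists cs. intros t dl.
  specialize (H (fun j => match j with O => t | _ => dl end)). simpl in H. rewrite H.
  unfold holds, cholds. simpl. split; intros A c Hc; specialize (A c Hc); lra.
Qed.

Lemma SP_closed C t : (forall e, 0 < e -> SP C t (- e)) -> SP C t 0.
Proof.
  destruct (SP_iff C) as [cs H]. intros He. apply H. intros c Hc.
  set (al := Q2R (fst c 0%nat)). set (be := Q2R (fst c 1%nat)). set (g := Q2R (snd c)).
  destruct (Rle_lt_dec be 0).
  - assert (A := proj1 (H _ _) (He 1 Rlt_0_1) c Hc). fold al be g in A. nra.
  - destruct (Rle_lt_dec (al * t) g). lra.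
    assert (Hp : 0 < (al * t - g) / (2 * be)) by (apply Rdiv_lt_0_compat; lra).
    assert (A := proj1 (H _ _) (He _ Hp) c Hc). fold al be g in A.
    replace (be * - ((al * t - g) / (2 * be))) with (- (al * t - g) / 2) in A by (field; lra). lra.
Qed.

Lemma div_le a t g : 0 < a -> a * t <= g -> t <= g / a.
Proof. intros Ha H. apply (Rmult_le_reg_l a); auto. replace (a * (g / a)) with g by (field; lra). auto. Qed.

Lemma list_min {A} (l : list A) (f : A -> R) : l <> nil ->
  exists c, In c l /\ forall c', In c' l -> f c <= f c'.
Proof.
  induction l as [|a l IH]; intros H. congruence.
  destruct l as [|b l']. exists a. split. simpl; auto. intros c' [<-|[]]. lra.
  destruct IH as [c [Hc Hm]]. congruence.
  destruct (Rle_lt_dec (f a) (f c)).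
  - exists a. split. simpl; auto. intros c' [<-|Hc']. lra. specialize (Hm c' Hc'). lra.
  - exists c. split. simpl; auto. intros c' [<-|Hc']. lra. auto.
Qed.

Lemma SP_max C t0 : SP C t0 0 -> exists q, SP C (Q2R q) 0 /\ forall t, SP C t 0 -> t <= Q2R q.
Proof.
  destruct (SP_iff C) as [cs H]. intros H0.
  assert (T : forall t, SP C t 0 <-> forall c, In c cs -> Q2R (fst c 0%nat) * t <= Q2R (snd c)).
  { intros t. rewrite H. split; intros A c Hc; specialize (A c Hc); lra. }
  assert (Ht0 := SP_le0 _ _ _ H0). rewrite T in H0.
  set (Pos := filter (isP 0) cs).
  assert (HPn : Pos <> nil).
  { intros E. assert (S1 : SP C 1 0). { apply T. intros c Hc. specialize (H0 c Hc).
      destruct (sign_cases 0 c) as [[_ Z]|[[Pc _]|[_ Nc]]].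
      - rewrite Z in *. lra.
      - assert (In c Pos) by (apply filter_In; auto). rewrite E in H1; destruct H1.
      - nra. }
    apply SP_le0 in S1. lra. }
  destruct (list_min Pos (fun c => Q2R (snd c) / Q2R (fst c 0%nat)) HPn) as [cm [Hcm Hmin]].
  apply filter_In in Hcm. destruct Hcm as [Hcm Pcm]. apply isP_pos in Pcm.
  assert (Hnz : ~ (fst cm 0%nat == 0)%Q). { intros E. apply Qeq_eqR in E. rewrite E, Q2R0 in Pcm. lra. }
  exists (snd cm / fst cm 0%nat)%Q. rewrite Q2R_div by auto.
  assert (Hmax : forall t, SP C t 0 -> t <= Q2R (snd cm) / Q2R (fst cm 0%nat)).
  { intros t Ht. rewrite T in Ht. apply div_le; auto. }
  split; auto.
  apply T. intros c Hc.
  destruct (sign_cases 0 c) as [[_ Z]|[[Pc Pc2]|[_ Nc]]].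
  - rewrite Z. specialize (H0 c Hc). rewrite Z in H0. lra.
  - assert (M := Hmin c ltac:(apply filter_In; auto)). simpl in M.
    apply (Rmult_le_compat_l (Q2R (fst c 0%nat))) in M; [|lra].
    replace (Q2R (fst c 0%nat) * (Q2R (snd c) / Q2R (fst c 0%nat))) with (Q2R (snd c)) in M by (field; lra). auto.
  - assert (Hle := Hmax t0 ltac:(apply T; auto)). specialize (H0 c Hc). nra.
Qed.

Lemma Rinf_SP C L a b U : Rinf C L a b U -> SP C (Q2R L - Q2R a) 0.
Proof. intros [_ [Hab [_ H]]]. destruct (H (Q2R a)) as [w1 [Hw1 HR]].
  split; [lra| apply Qle_Rle; auto]. apply RC_SP in HR. eapply SP_mono; eauto; lra. Qed.

Lemma build_Rinf C L a0 b0 U0 amin : Rinf C L a0 b0 U0 -> (L <= amin)%Q -> (amin <= a0)%Q ->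
  SP C (Q2R L - Q2R amin) 0 -> exists b U, Rinf C L amin b U.
Proof.
  intros HR HLa Ha HS. destruct (SP_RC _ _ _ HS) as [U1 [w1 [Hw1 HR1]]].
  pose proof HR as [_ [Hab0 [_ H0]]]. apply Qle_Rle in Hab0, Ha, HLa.
  destruct (rat_above (Rmax (Q2R b0) (Q2R a0 + (w1 - Q2R amin)))) as [b Hb].
  destruct (rat_above (Rmax (Rmax (Q2R U1 + (Q2R a0 - Q2R amin)) (Q2R U0 + (Q2R b - Q2R b0))) (Q2R b))) as [U HU].
  assert (M1 := Rmax_l (Q2R b0) (Q2R a0 + (w1 - Q2R amin))).
  assert (M2 := Rmax_r (Q2R b0) (Q2R a0 + (w1 - Q2R amin))).
  assert (M3 := Rmax_l (Rmax (Q2R U1 + (Q2R a0 - Q2R amin)) (Q2R U0 + (Q2R b - Q2R b0))) (Q2R b)).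
  assert (M4 := Rmax_r (Rmax (Q2R U1 + (Q2R a0 - Q2R amin)) (Q2R U0 + (Q2R b - Q2R b0))) (Q2R b)).
  assert (M5 := Rmax_l (Q2R U1 + (Q2R a0 - Q2R amin)) (Q2R U0 + (Q2R b - Q2R b0))).
  assert (M6 := Rmax_r (Q2R U1 + (Q2R a0 - Q2R amin)) (Q2R U0 + (Q2R b - Q2R b0))).
  exists b, U. split; [apply Rle_Qle; auto|]. split; [apply Rle_Qle; lra|]. split; [apply Rle_Qle; lra|].
  intros w Hw. destruct (Rlt_le_dec w (Q2R a0)).
  - exists (w1 + (w - Q2R amin)). split. lra.
    assert (A := RC_shift C L U1 U (Q2R amin) w1 (w - Q2R amin) HR1 ltac:(lra) ltac:(lra)).
    replace (Q2R amin + (w - Q2R amin)) with w in A by ring. auto.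
  - destruct (Rle_lt_dec w (Q2R b0)).
    + destruct (H0 w ltac:(lra)) as [w2 [Hw2 R2]]. exists w2. split. lra.
      assert (A := RC_shift C L U0 U w w2 0 R2 ltac:(lra) ltac:(lra)). rewrite !Rplus_0_r in A. auto.
    + destruct (H0 (Q2R b0) ltac:(lra)) as [w2 [Hw2 R2]]. exists (w2 + (w - Q2R b0)). split. lra.
      assert (A := RC_shift C L U0 U (Q2R b0) w2 (w - Q2R b0) R2 ltac:(lra) ltac:(lra)).
      replace (Q2R b0 + (w - Q2R b0)) with w in A by ring. auto.
Qed.

Lemma nat_above r : exists k, r < INR k.
Proof. destruct (archimed r) as [A _]. exists (Z.to_nat (up r)).
  destruct (Z.le_gt_cases 0 (up r)).
  - rewrite INR_IZR_INZ, Z2Nat.id; auto.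
  - assert (IZR (up r) < 0) by (apply IZR_lt; lia). simpl. pose proof (pos_INR (Z.to_nat (up r))). lra.
Qed.

Lemma RC_low C L U w0 w1 : RC C L U w0 w1 -> Q2R L <= w0.
Proof.
  intros [d [v [ee [_ [He0 [Hi [_ [Hen Hin]]]]]]]].
  destruct (Nat.eq_dec (nstates C) 0) as [E|E].
  - rewrite E, He0 in Hin. unfold inE in Hin. lra.
  - destruct (Hi O) as [_ [_ [_ [_ [_ [_ [Hin2 _]]]]]]]. lia.
    unfold inE in Hin2. rewrite He0 in Hin2. lra.
Qed.

Lemma run_SP C L U w : infRun C L U w -> SP C (Q2R L - w) 0.
Proof.
  intros [W [HW0 HW]]. apply SP_closed. intros e He.
  assert (Hex : exists k, W k <= w /\ W (S k) - W k > - e).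
  { apply NNPP. intros Hn.
    assert (Hk : forall k, W k <= w - INR k * e).
    { induction k. simpl. rewrite HW0. lra.
      assert (0 <= INR k * e) by (apply Rmult_le_pos; [apply pos_INR|lra]).
      assert (W (S k) - W k <= - e). { destruct (Rle_lt_dec (W (S k) - W k) (- e)); auto.
        exfalso. apply Hn. exists k. split; lra. }
      rewrite S_INR. lra. }
    destruct (nat_above ((w - Q2R L) / e)) as [k Hk2].
    assert (A : w - Q2R L < INR k * e).
    { apply (Rmult_lt_compat_r e) in Hk2; auto. replace ((w - Q2R L) / e * e) with (w - Q2R L) in Hk2 by (field; lra). auto. }
    specialize (Hk k). assert (B := RC_low _ _ _ _ _ (HW k)). lra. }
  destruct Hex as [k [H1 H2]]. assert (A := RC_SP _ _ _ _ _ (HW k)).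
  eapply SP_mono; eauto; lra.
Qed.

Theorem mainTheorem7 (C : cycleETP) (L : Q) :
  wf_cycle C ->
  (exists a b U : Q, Rinf C L a b U) ->
  exists amin : Q,
    (exists b U : Q, Rinf C L amin b U) /\
    (forall a b U : Q, Rinf C L a b U -> (amin <= a)%Q) /\
    (forall (w : R) (U : Q), w < Q2R amin -> ~ infRun C L U w) /\
    (forall w : R, Q2R amin <= w -> exists U : Q, infRun C L U w).
Proof.
  intros _ [a0 [b0 [U0 HR]]].
  destruct (SP_max C _ (Rinf_SP _ _ _ _ _ HR)) as [q [Hq Hmax]].
  assert (Hq0 := SP_le0 _ _ _ Hq).
  exists (L - q)%Q.
  assert (Ham : Q2R (L - q) = Q2R L - Q2R q) by apply Q2R_minus.
  assert (Hmin : forall a b U, Rinf C L a b U -> (L - q <= a)%Q).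
  { intros a b U H. apply Rinf_SP in H. apply Hmax in H. apply Rle_Qle. lra. }
  assert (HB : exists b U, Rinf C L (L - q) b U).
  { eapply build_Rinf; eauto. apply Rle_Qle; lra. rewrite Ham. replace (Q2R L - (Q2R L - Q2R q)) with (Q2R q) by ring. auto. }
  split; [auto|split; [auto|split]].
  - intros w U Hw Hr. apply run_SP in Hr. apply Hmax in Hr. lra.
  - intros w Hw. destruct HB as [b [U HR2]].
    assert (Hr := Rinf_run _ _ _ _ _ (Q2R (L - q)) HR2).
    destruct HR2 as [_ [Hab _]]. apply Qle_Rle in Hab. specialize (Hr ltac:(lra)).
    destruct (rat_above (Q2R U + (w - Q2R (L - q)))) as [U' HU'].
    exists U'. replace w with (Q2R (L - q) + (w - Q2R (L - q))) by ring.
    eapply infRun_shift; eauto. lra.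
Qed.
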